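(* Let $M=(\mathbf{K}^{\mathbf{n}},\rho)$ be a sum-matroid of rank $k=\rho(\mathbf{K}^{\mathbf{n}})$, let $n=n_1+\cdots+n_\ell$, and let $d_i=d^S_i(M)$ for $i=1,\dots,\eta(\mathbf{K}^{\mathbf{n}})=n-k$ be its generalized weights. Then $d_1<d_2<\cdots<d_{n-k}$.
   Context: $\ell,n_1,\dots,n_\ell$ positive integers, $K_1,\dots,K_\ell$ finite fields. $\mathcal{P}(\mathbf{K}^{\mathbf{n}})=\mathcal{P}(K_1^{n_1})\times\cdots\times\mathcal{P}(K_\ell^{n_\ell})$, $\mathcal{P}(K_i^{n_i})$ the lattice of $K_i$-subspaces of $K_i^{n_i}$, with componentwise inclusion, sum and intersection; $\mathrm{Rk}(\mathcal{L})=\sum_i\dim_{K_i}\mathcal{L}_i$; $\mathbf{K}^{\mathbf{n}}=(K_1^{n_1},\dots,K_\ell^{n_\ell})$. A sum-matroid is $(\mathbf{K}^{\mathbf{n}},\rho)$ with $\rho:\mathcal{P}(\mathbf{K}^{\mathbf{n}})\to\mathbb{Z}_{\ge0}$ satisfying (R1) $0\le\rho(\mathcal{L})\le\mathrm{Rk}(\mathcal{L})$; (R2) $\mathcal{L}\subseteq\mathcal{L}'\Rightarrow\rho(\mathcal{L})\le\rho(\mathcal{L}')$; (R3) $\rho(\mathcal{L}+\mathcal{L}')+\rho(\mathcal{L}\cap\mathcal{L}')\le\rho(\mathcal{L})+\rho(\mathcal{L}')$. Nullity: $\eta(\mathcal{L})=\mathrm{Rk}(\mathcal{L})-\rho(\mathcal{L})$.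 Generalized weights: $d^S_i(M)=\min\{\mathrm{Rk}(\mathcal{L}):\eta(\mathcal{L})=i\}$ for $i=1,\dots,\eta(\mathbf{K}^{\mathbf{n}})$. *)

(* Defs.v *)
From HB Require Import structures.
From mathcomp Require Import all_boot all_order all_algebra all_field.
Set Implicit Arguments. Unset Strict Implicit. Unset Printing Implicit Defensive.
Import GRing.Theory.

(* Sum-matroids over a product of lattices of subspaces P(K_1^{n_1}) x ... x P(K_l^{n_l}).
   The ambient spaces K_i^{n_i} are the row spaces 'rV[K i]_(n i). *)

Section SumMatroid.
Variables (l : nat) (K : 'I_l -> finFieldType) (n : 'I_l -> nat).

Definition lat := forall i : 'I_l, {vspace 'rV[K i]_(n i)}.

Definition lat_le (L L' : lat) : Prop := forall i, (L i <= L' i)%VS.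
Definition lat_add (L L' : lat) : lat := fun i => (L i + L' i)%VS.
Definition lat_cap (L L' : lat) : lat := fun i => (L i :&: L' i)%VS.
Definition lat_full : lat := fun i => fullv.

Definition Rk (L : lat) : nat := \sum_(i < l) \dim (L i).

Definition is_sum_matroid (rho : lat -> nat) : Prop :=
  (forall L, rho L <= Rk L) /\
  (forall L L', lat_le L L' -> rho L <= rho L') /\
  (forall L L', rho (lat_add L L') + rho (lat_cap L L') <= rho L + rho L').

Definition nullity (rho : lat -> nat) (L : lat) : nat := Rk L - rho L.

Definition is_gen_weight (rho : lat -> nat) (i d : nat) : Prop :=
  (exists L, nullity rho L = i /\ Rk L = d) /\
  (forall L, nullity rho L = i -> d <= Rk L).

End SumMatroid.

(* Main.v *)
Require Import Defs.
From HB Require Import structures.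
From mathcomp Require Import all_boot all_order all_algebra all_field.
From Stdlib Require Import Classical.
From mathcomp Require Import zify.
Set Implicit Arguments. Unset Strict Implicit. Unset Printing Implicit Defensive.
Import GRing.Theory.

Section Hyp.
Variables (F : fieldType) (vT : vectType F).
Definition hyp (V : {vspace vT}) : {vspace vT} := <<behead (vbasis V)>>%VS.
Lemma hyp_props (V : {vspace vT}) : (0 < \dim V)%N ->
  (hyp V <= V)%VS /\ \dim V = (\dim (hyp V)).+1.
Proof.
move=> hV; rewrite /hyp.
have fr := basis_free (vbasisP V).
have sz := size_tuple (vbasis V).
have mem : {subset (vbasis V : seq vT) <= V} by move=> y; apply: vbasis_mem.
move: fr sz mem; case: (tval (vbasis V)) => [|x t] /=.
  by move=> _ h; rewrite -h in hV.
rewrite free_cons => /andP[_ ft] sz mem; split.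
  by apply/span_subvP => y yt; apply: mem; rewrite inE yt orbT.
by move/eqP: ft => ->; rewrite sz.
Qed.
End Hyp.

Section Main.
Variables (l : nat) (K : 'I_l -> finFieldType) (n : 'I_l -> nat).
Variables (rho : lat K n -> nat) (hrho : is_sum_matroid rho).

Lemma Rk_le (L L' : lat K n) : lat_le L L' -> (Rk L <= Rk L')%N.
Proof. by move=> h; apply: leq_sum => i _; apply: dimvS. Qed.

Lemma rho_Rk L : (rho L <= Rk L)%N.
Proof. by case: hrho. Qed.

Lemma lat_le_trans (A B C : lat K n) : lat_le A B -> lat_le B C -> lat_le A C.
Proof. by move=> h1 h2 i; apply: subv_trans (h1 i) (h2 i). Qed.

Lemma lat_le_refl (A : lat K n) : lat_le A A.
Proof. by move=> i; apply: subvv. Qed.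

Lemma hyper (L : lat K n) : (0 < Rk L)%N ->
  exists L', [/\ lat_le L' L, Rk L = (Rk L').+1 &
                 (nullity rho L <= (nullity rho L').+1)%N].
Proof.
move=> hR.
case: (pickP (fun i => 0 < \dim (L i))%N) => [i hi|h0]; last first.
  move: hR; rewrite /Rk big1 // => j _.
  by move: (h0 j) => /= /negbT; rewrite lt0n negbK => /eqP.
pose L' : lat K n := fun k => if k == i then hyp (L k) else L k.
have hle : lat_le L' L.
  move=> k; rewrite /L'; case: (k == i) => //.
  by rewrite /hyp; apply/span_subvP => y /mem_behead /vbasis_mem.
have hRk : Rk L = (Rk L').+1.
  rewrite /Rk (bigD1 i) //= [in RHS](bigD1 i) //= /L' eqxx.
  case: (hyp_props hi) => _ ->; rewrite addSn; congr (_ + _).+1.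
  by apply: eq_bigr => k /negbTE ->.
exists L'; split => //.
have := rho_Rk L'; have := rho_Rk L.
case: hrho => _ [hm _]; have := hm _ _ hle.
rewrite /nullity hRk; lia.
Qed.

Lemma descend m : forall r (L : lat K n), (Rk L <= r)%N -> (m <= nullity rho L)%N ->
  exists L', lat_le L' L /\ nullity rho L' = m.
Proof.
elim=> [|r IH] L hr hm.
  exists L; split; first exact: lat_le_refl.
  move: hm hr; rewrite /nullity.
  move: (Rk L) (rho L) => a b; lia.
case: (ltngtP m (nullity rho L)) hm => // hlt _; last first.
  by exists L; split => //; exact: lat_le_refl.
have hR : (0 < Rk L)%N.
  move: hlt; rewrite /nullity; move: (Rk L) (rho L) => a b; lia.
case: (hyper hR) => L' [hle hRk hn].
case: (IH L').
- move: hr hRk; move: (Rk L) (Rk L') => a b; lia.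
- move: hlt hn; move: (nullity rho L) (nullity rho L') => a b; lia.
move=> L'' [h1 h2].
by exists L''; split => //; apply: lat_le_trans h1 hle.
Qed.

Lemma minex i : forall r, (exists L, nullity rho L = i /\ (Rk L <= r)%N) ->
  exists d, is_gen_weight rho i d.
Proof.
elim=> [|r IH] [L [h1 h2]].
  exists (Rk L); split; first by exists L.
  by move=> L' _; move: h2; move: (Rk L) (Rk L') => a b; lia.
case: (classic (exists L', nullity rho L' = i /\ (Rk L' <= r)%N)) => [h|h].
  exact: IH.
exists (Rk L); split; first by exists L.
move=> L' hL'; case: (leqP (Rk L) (Rk L')) => // hlt.
exfalso; apply: h; exists L'; split => //.
by move: hlt h2; move: (Rk L) (Rk L') => a b; lia.
Qed.
End Main.

Theorem mainTheorem9 (l : nat) (K : 'I_l -> finFieldType) (n : 'I_l -> nat)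
  (hl : (0 < l)%N) (hn : forall i, (0 < n i)%N)
  (rho : lat K n -> nat) (hrho : is_sum_matroid rho) :
  let N := nullity rho (lat_full K n) in
  (forall i, (1 <= i <= N)%N -> exists d, is_gen_weight rho i d) /\
  (forall i j di dj, (1 <= i)%N -> (i < j)%N -> (j <= N)%N ->
     is_gen_weight rho i di -> is_gen_weight rho j dj -> (di < dj)%N).
Proof.
move=> N; split.
  move=> i /andP[_ hi].
  case: (descend hrho (leqnn _) hi) => L [_ hL].
  by apply: (@minex _ _ _ _ _ (Rk L)); exists L.
move=> i j di dj h1 hij hj [_ hdi] [[L [hL1 hL2]] _].
have hR : (0 < Rk L)%N.
  have := rho_Rk hrho L; move: hL1 h1 hij; rewrite /nullity.
  move: (Rk L) (rho L) => a b; lia.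
case: (hyper hrho hR) => L' [hle hRk hn'].
have hm : (i <= nullity rho L')%N.
  move: hn' hL1 hij; move: (nullity rho L) (nullity rho L') => a b; lia.
case: (descend hrho (leqnn _) hm) => L'' [hle' hL''].
have := hdi _ hL''; have := Rk_le hle'.
move: hRk hL2; move: (Rk L) (Rk L') (Rk L'') => a b c; lia.
Qed.
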